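(* Let $\mathbf{A}$ be an $n\times n$ skew-symmetric matrix over a field $K$ and $\mathbf{v}\in K^n$. Let \[\mathbf{A}_{\mathbf{v}}=\begin{pmatrix}\mathbf{A}&\mathbf{v}\\-\mathbf{v}^T&0\end{pmatrix},\] an $(n+1)\times(n+1)$ matrix. Then for every $I\subseteq[n]$, \[\det\bigl((\mathbf{A}+\mathbf{v}\mathbf{v}^T)[I]\bigr)=\det\bigl(\mathbf{A}_{\mathbf{v}}[\alpha(I)]\bigr),\] where $\alpha(I)=I$ if $|I|$ is even and $\alpha(I)=I\cup\{n+1\}$ if $|I|$ is odd.
   Context: A matrix is skew-symmetric if $\mathbf{A}_{ij}=-\mathbf{A}_{ji}$ for all $i,j$ and $\mathbf{A}_{ii}=0$ for all $i$. $\mathbf{M}[X]$ denotes the principal submatrix indexed by $X$, with $\det(\mathbf{M}[\emptyset])=1$. *)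

(* Defs.v *)
From mathcomp Require Import all_boot all_order all_algebra.
Set Implicit Arguments. Unset Strict Implicit. Unset Printing Implicit Defensive.
Import GRing.Theory.
Local Open Scope ring_scope.

Definition skew_symmetric (K : fieldType) (n : nat) (A : 'M[K]_n) : Prop :=
  (forall i j, A i j = - A j i) /\ (forall i, A i i = 0).

(* principal submatrix M[X], rows/columns in increasing order of X *)
Definition principal_submx (K : fieldType) (n : nat) (M : 'M[K]_n) (X : {set 'I_n})
  : 'M[K]_#|X| :=
  \matrix_(i < #|X|, j < #|X|) M (enum_val i) (enum_val j).

Definition bordered_mx (K : fieldType) (n : nat) (A : 'M[K]_n) (v : 'cV[K]_n)
  : 'M[K]_(n + 1) :=
  block_mx A v (- v^T) 0.

Definition alpha_set (n : nat) (I : {set 'I_n}) : {set 'I_(n + 1)} :=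
  if odd #|I| then (lshift 1 @: I) :|: [set rshift n (ord0 : 'I_1)]
  else lshift 1 @: I.

(* Main.v *)
Require Import Defs.
From mathcomp Require Import all_boot all_order all_algebra all_fingroup.
Set Implicit Arguments. Unset Strict Implicit. Unset Printing Implicit Defensive.
Import GRing.Theory.
Local Open Scope ring_scope.

Lemma row'_eqE (K : fieldType) n (X Y : 'M[K]_n) i0 :
  (forall i j, i != i0 -> X i j = Y i j) -> row' i0 X = row' i0 Y.
Proof. by move=> H; apply/matrixP => i j; rewrite !mxE H // eq_sym neq_lift. Qed.

Lemma row_sumE (K : fieldType) n (X Y Z : 'M[K]_n) i0 :
  (forall j, X i0 j = Y i0 j + Z i0 j) -> row i0 X = 1 *: row i0 Y + 1 *: row i0 Z.
Proof. by move=> H; apply/matrixP => i j; rewrite !scale1r !mxE H. Qed.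

Lemma det_border (K : fieldType) m (B : 'M[K]_m) (w : 'cV[K]_m) :
  \det (B + w *m w^T) = \det (block_mx B w (- w^T) (0 : 'M_1)) + \det B.
Proof.
have e1 : block_mx B w (- w^T) (1%:M : 'M_1) =
   block_mx 1%:M w 0 1%:M *m block_mx (B + w *m w^T) 0 (- w^T) 1%:M.
  rewrite mulmx_block !mul1mx !mulmx0 !mul0mx !mulmx1 !add0r mulmxN.
  by rewrite addrK.
have e2 : \det (block_mx B w (- w^T) (1%:M : 'M_1)) = \det (B + w *m w^T).
  by rewrite e1 det_mulmx det_ublock det_lblock !det1 !mul1r mulr1.
rewrite -e2 (@determinant_multilinear _ _ _ (block_mx B w (- w^T) (0 : 'M_1))
   (block_mx B w 0 (1%:M : 'M_1)) (rshift m ord0) 1 1).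
- by rewrite !mul1r det_ublock det1 mulr1.
- apply: row_sumE => j; rewrite -(splitK j); case: (split j) => b /=.
    by rewrite !block_mxEdl !mxE addr0.
  by rewrite !block_mxEdr !mxE (ord1 b) /= add0r.
- apply: row'_eqE => i j; rewrite -(splitK i) -(splitK j).
  case: (split i) => a; case: (split j) => b /=;
    rewrite ?block_mxEul ?block_mxEur ?block_mxEdl ?block_mxEdr //;
    by rewrite (ord1 a) eqxx.
- apply: row'_eqE => i j; rewrite -(splitK i) -(splitK j).
  case: (split i) => a; case: (split j) => b /=;
    rewrite ?block_mxEul ?block_mxEur ?block_mxEdl ?block_mxEdr //;
    by rewrite (ord1 a) eqxx.
Qed.
Lemma invol_even (T : finType) (f : T -> T) :
  involutive f -> (forall x, f x != x) -> forall A : {set T},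
  (forall x, x \in A -> f x \in A) -> ~~ odd #|A|.
Proof.
move=> fK fN A; move: {2}#|A| (leqnn #|A|) => k.
elim: k A => [|k IH] A.
  by rewrite leqn0 => /eqP ->.
move=> hk hA.
have [A0|[x xA]] := set_0Vmem A; first by rewrite A0 cards0.
have fxA : f x \in A :\ x by rewrite !inE fN hA.
have hc : #|A| = (#|A :\ x :\ f x|).+2.
  by rewrite (cardsD1 x A) xA (cardsD1 (f x) (A :\ x)) fxA.
rewrite hc /= negbK.
apply: IH.
  by rewrite hc ltnS in hk; apply: leq_trans (leqnSn _) hk.
move=> y; rewrite !inE => /and3P [y1 y2 yA].
rewrite hA // andbT; apply/andP; split.
  by apply: contra y2 => /eqP /(can_inj fK) ->.
by apply: contra y1 => /eqP <-; rewrite fK.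
Qed.

Lemma det_skew_odd (K : fieldType) m (M : 'M[K]_m) :
  (forall i j, M i j = - M j i) -> (forall i, M i i = 0) -> odd m -> \det M = 0.
Proof.
move=> hs hd hm.
pose t (s : 'S_m) := (-1) ^+ s * \prod_i M i (s i).
have tV : forall s : 'S_m, t (s^-1)%g = - t s.
  move=> s.
  rewrite /t odd_permV (reindex_inj (@perm_inj _ s)) /=.
  under eq_bigr => i _ do rewrite permK hs.
  have e : (-1) ^+ m = -1 :> K by rewrite -signr_odd hm.
  by rewrite prodrN card_ord e mulN1r mulrN.
have tI : forall s : 'S_m, (s^-1)%g = s -> t s = 0.
  move=> s.
  move=> sI.
  have /existsP [x /eqP sx] : [exists x, s x == x].
    apply: contraT; rewrite negb_exists => /forallP hn.
    have := @invol_even _ s _ (fun x => hn x) setT.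
    rewrite cardsT card_ord hm; apply => //.
    by move=> x; rewrite -{1}sI permK.
  by rewrite /t (bigD1 x) //= sx hd mul0r mulr0.
rewrite /determinant; change (\sum_s t s = 0).
pose r (s : 'S_m) := nat_of_ord (enum_rank s).
rewrite (bigID (fun s => r s < r (s^-1)%g)%N) /=.
rewrite [X in _ + X](bigID (fun s => r (s^-1)%g < r s)%N) /=.
rewrite [X in _ + (_ + X)]big1 ?addr0; last first.
  move=> s /andP[h1 h2]; apply: tI; apply: enum_rank_inj; apply: val_inj => /=.
  by apply/eqP; case: ltngtP h1 h2.
rewrite [X in _ + X](reindex_inj (@invg_inj _)) /=.
rewrite [X in _ + X](eq_bigl (fun s => r s < r (s^-1)%g)%N); last first.
  by move=> s; rewrite invgK; case: ltngtP.
under [X in _ + X]eq_bigr => s _ do rewrite tV.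
by rewrite sumrN subrr.
Qed.
Lemma det_mxsub_inj (K : fieldType) N (M : 'M[K]_N) k1 k2
  (f1 : 'I_k1 -> 'I_N) (f2 : 'I_k2 -> 'I_N) :
  injective f1 -> injective f2 -> codom f1 =i codom f2 ->
  \det (mxsub f1 f1 M) = \det (mxsub f2 f2 M).
Proof.
move=> i1 i2 hc.
have ek : k1 = k2.
  by rewrite -[k1]card_ord -[k2]card_ord -(card_codom i1) -(card_codom i2); apply: eq_card.
subst k2.
have hf : forall i, exists j, f2 i = f1 j.
  by move=> i; apply/codomP; rewrite hc; apply: codom_f.
pose h i := odflt i [pick j | f1 j == f2 i].
have hh : forall i, f1 (h i) = f2 i.
  move=> i; rewrite /h; case: pickP => [j /eqP //|H].
  by have [j e] := hf i; move: (H j); rewrite e eqxx.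
have hinj : injective h by move=> a b e; apply: i2; rewrite -!hh e.
pose s := perm hinj.
have -> : mxsub f2 f2 M = row_perm s (col_perm s (mxsub f1 f1 M)).
  by apply/matrixP => i j; rewrite !mxE !permE !hh.
rewrite row_permE col_permE !det_mulmx !det_perm odd_permV.
by rewrite mulrCA -expr2 sqrr_sign mulr1.
Qed.

Lemma codom_enum_val (T : finType) (X : {set T}) :
  codom (@enum_val _ (mem X)) =i X.
Proof.
move=> x; apply/codomP/idP => [[i ->]|xX]; first exact: enum_valP.
by exists (enum_rank_in xX x); rewrite enum_rankK_in.
Qed.

Lemma det_psub_inj (K : fieldType) N (M : 'M[K]_N) (X : {set 'I_N}) k
  (f : 'I_k -> 'I_N) : injective f -> codom f =i X ->
  \det (principal_submx M X) = \det (mxsub f f M).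
Proof.
move=> fi fc.
have -> : principal_submx M X = mxsub (@enum_val _ (mem X)) (@enum_val _ (mem X)) M by [].
apply: det_mxsub_inj => //; first exact: enum_val_inj.
by move=> x; rewrite codom_enum_val fc.
Qed.

Theorem lemma2p27 (K : fieldType) (n : nat) (A : 'M[K]_n) (v : 'cV[K]_n)
  (hA : skew_symmetric A) (I : {set 'I_n}) :
  \det (principal_submx (A + v *m v^T) I)
  = \det (principal_submx (bordered_mx A v) (alpha_set I)).
Proof.
case: hA => hs hd.
pose e := @enum_val _ (mem I).
have einj : injective e by apply: enum_val_inj.
pose B := mxsub e e A.
pose w := \col_i v (e i) 0.
have eL : principal_submx (A + v *m v^T) I = B + w *m w^T.
  by apply/matrixP => i j; rewrite !mxE !big_ord1 !mxE.
have Bs : forall i j, B i j = - B j i by move=> i j; rewrite !mxE hs.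
have Bd : forall i, B i i = 0 by move=> i; rewrite !mxE hd.
rewrite eL det_border.
rewrite /alpha_set; case: ifP => hodd.
  pose g (i : 'I_(#|I| + 1)) : 'I_(n + 1) :=
    match split i with inl a => lshift 1 (e a) | inr _ => rshift n ord0 end.
  have gl : forall a, g (lshift 1 a) = lshift 1 (e a).
    by move=> a; rewrite /g (@unsplitK _ 1 (inl _ a)).
  have gr : forall b, g (rshift #|I| b) = rshift n ord0.
    by move=> b; rewrite /g (@unsplitK #|I| 1 (inr _ b)).
  have ginj : injective g.
    move=> x y; rewrite -(splitK x) -(splitK y).
    case: (split x) => a; case: (split y) => b /=; rewrite ?gl ?gr => h.
    - by move/lshift_inj/einj: h => ->.
    - by move/eqP: h; rewrite eq_lrshift.
    - by move/eqP: h; rewrite eq_rlshift.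
    - by rewrite (ord1 a) (ord1 b).
  have gc : codom g =i [set lshift 1 x | x in I] :|: [set rshift n ord0].
    move=> x; apply/codomP/idP => [[i ->]|].
      rewrite -(splitK i); case: (split i) => a /=; rewrite ?gl ?gr !inE.
        by rewrite imset_f ?enum_valP.
      by rewrite eqxx orbT.
    rewrite !inE => /orP [/imsetP [y yI ->]|/eqP ->].
      by exists (lshift 1 (enum_rank_in yI y)); rewrite gl /e enum_rankK_in.
    by exists (rshift #|I| ord0); rewrite gr.
  rewrite (det_psub_inj _ ginj gc).
  have -> : mxsub g g (bordered_mx A v) = block_mx B w (- w^T) 0.
    apply/matrixP => i j; rewrite -(splitK i) -(splitK j) mxE.
    case: (split i) => a; case: (split j) => b /=;
      rewrite ?gl ?gr /bordered_mx ?block_mxEul ?block_mxEur ?block_mxEdl ?block_mxEdr !mxE //.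
  by rewrite (det_skew_odd Bs Bd hodd) addr0.
pose g (a : 'I_#|I|) : 'I_(n + 1) := lshift 1 (e a).
have ginj : injective g by move=> a b /lshift_inj /einj.
have gc : codom g =i [set lshift 1 x | x in I].
  move=> x; apply/codomP/idP => [[i ->]|].
    by rewrite /g imset_f ?enum_valP.
  move=> /imsetP [y yI ->].
  by exists (enum_rank_in yI y); rewrite /g /e enum_rankK_in.
rewrite (det_psub_inj _ ginj gc).
have -> : mxsub g g (bordered_mx A v) = B.
  by apply/matrixP => i j; rewrite mxE /bordered_mx /g block_mxEul /B mxE.
rewrite (@det_skew_odd _ _ (block_mx B w (- w^T) 0)) ?add0r //; last first.
  by rewrite addn1 /= hodd.
  move=> i; rewrite -(splitK i); case: (split i) => a /=.
    by rewrite block_mxEul Bd.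
  by rewrite block_mxEdr mxE.
move=> i j; rewrite -(splitK i) -(splitK j).
case: (split i) => a; case: (split j) => b /=;
  rewrite ?block_mxEul ?block_mxEur ?block_mxEdl ?block_mxEdr;
  first exact: Bs; by rewrite !mxE ?opprK ?oppr0.
Qed.
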